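(* Let $N\ge1$ and $L=\sum_{i=0}^N a_i(x)\partial_x^i$ with $a_i(x)=\sum_{j=0}^i a_{i,j}x^j$ complex polynomials, $a_0\equiv0$, $a_i\equiv0$ for $i>N$, and let $\delta_n^{(k)}=\sum_{i=k}^n\binom ni i!\,a_{i,i-k}$ ($0\le k\le n$). Suppose there are $\lambda_n\in\mathbb{C}$ ($n\ge0$, $\lambda_0=0$, $\lambda_n\notin\{0,\lambda_1,\ldots,\lambda_{n-1}\}$ for $n\ge1$) and monic polynomials $P_n(x)=\sum_{i=0}^nb_{n,i}x^i$ of degree $n$ with $\sum_{i=1}^Na_i\partial_x^iP_n=\lambda_nP_n$ for all $n\ge0$. Then for every $n\ge1$ and $k=1,\ldots,n$, $$(-1)^{k+1}\delta_n^{(k)}=\sum_{s=1}^n\Delta_{k,n,s}\,s!\,a_{s,s},$$ where $\Delta_{k,n,s}$ is the determinant of the $k\times k$ matrix $D$ with first row $D_{1,c}=\left[\binom{n-k}{s-1}+\binom{n-k+1}{s-1}+\cdots+\binom{n-k+c-1}{s-1}\right]b_{n-k+c,\,n-k}$ ($1\le c\le k$) and, for $2\le\rho\le k$, $D_{\rho,c}=b_{n-k+c,\;n-k+\rho-1}$.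
   Context: Conventions: $b_{m,m}=1$, $b_{m,l}=0$ for $l>m$; $\binom{m}{s-1}=0$ for $m<s-1$; $a_{s,s}=0$ for $s>N$. $\partial_x^i$ is the $i$-th derivative in $x$. *)

(* Defs.v *)
From HB Require Import structures.
From mathcomp Require Import all_boot all_order all_algebra.
From mathcomp Require Import complex.
From mathcomp Require Import reals.
Set Implicit Arguments. Unset Strict Implicit. Unset Printing Implicit Defensive.
Import Order.TTheory GRing.Theory Num.Theory.
Local Open Scope ring_scope.

Section Defs.
Variable C : fieldType.

Definition delta (a : nat -> {poly C}) (n k : nat) : C :=
  \sum_(k <= i < n.+1) ('C(n, i))%:R * (i`!)%:R * (a i)`_(i - k).

(* Delta_{k,n,s}: determinant of the k x k matrix D (0-based indices r, c). *)
Definition Dmat (P : nat -> {poly C}) (k n s : nat) : 'M[C]_k :=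
  \matrix_(r < k, c < k)
    if r == 0%N :> nat then
      (\sum_(0 <= t < c.+1) ('C(n - k + t, s - 1))%:R) * (P (n - k + c.+1)%N)`_(n - k)
    else (P (n - k + c.+1)%N)`_(n - k + r).

Definition Delta (P : nat -> {poly C}) (k n s : nat) : C := \det (Dmat P k n s).
End Defs.

(* Main.v *)
Require Import Defs.
From HB Require Import structures.
From mathcomp Require Import all_boot all_order all_algebra.
From mathcomp Require Import complex.
From mathcomp Require Import reals.
Import Order.TTheory GRing.Theory Num.Theory.
From mathcomp Require Import zify ring.
Local Open Scope ring_scope.

Lemma sum_range {C : fieldType} (F : nat -> C) lo' lo hi B :
  (lo' <= lo)%N -> (lo <= hi)%N -> (hi <= B)%N ->
  (forall i, (lo' <= i < lo)%N -> F i = 0) ->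
  (forall i, (hi <= i < B)%N -> F i = 0) ->
  \sum_(lo <= i < hi) F i = \sum_(lo' <= i < B) F i.
Proof.
move=> h1 h2 h3 z1 z2.
rewrite (@big_cat_nat _ _ _ lo lo' B) //=; last by lia.
rewrite (@big_cat_nat _ _ _ hi lo B) //=.
have -> : \sum_(lo' <= i < lo) F i = 0.
  by rewrite big_nat_cond big1 // => i /andP[hh _]; rewrite z1.
have -> : \sum_(hi <= i < B) F i = 0.
  by rewrite big_nat_cond big1 // => i /andP[hh _]; rewrite z2.
by rewrite add0r addr0.
Qed.

Lemma bz {C : fieldType} {p : {poly C}} {j t : nat} : size p = j.+1 -> (j < t)%N -> p`_t = 0.
Proof. move=> hs ht; by rewrite nth_default // hs. Qed.

Lemma b1 {C : fieldType} {p : {poly C}} {j : nat} : size p = j.+1 -> p \is monic -> p`_j = 1.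
Proof. by move=> hs /monicP; rewrite lead_coefE hs. Qed.

Lemma coef_term {C : fieldType} (p q : {poly C}) i l : (size q <= i.+1)%N ->
  (q * p^`(i))`_l = \sum_(0 <= d < i.+1) ('C(l+d,i))%:R * (i`!)%:R * q`_(i-d) * p`_(l+d).
Proof.
move=> hq; rewrite coefM.
pose H u := q`_u * p`_(l+i-u) * ('C(l+i-u,i) * i`!)%:R.
transitivity (\sum_(0 <= u < l + i + 1) H u).
  transitivity (\sum_(0 <= u < l.+1) q`_u * p^`(i)`_(l - u)); first by rewrite big_mkord.
  rewrite (eq_big_nat _ _ (F2 := H)); last first.
    move=> u /andP[_ hu]; rewrite coef_derivn /H.
    have -> : (i + (l - u) = l + i - u)%N by lia.
    by rewrite bin_ffact mulr_natr mulrnAr.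
  apply: (@sum_range _ H) => //; try lia.
  move=> u /andP[h1 h2]; rewrite /H bin_small ?mul0n ?mulr0 //; lia.
symmetry; rewrite big_nat_rev /=.
rewrite (eq_big_nat _ _ (F2 := H)); last first.
  move=> u /andP[_ hu]; rewrite /H.
  have -> : (0 + i.+1 - u.+1 = i - u)%N by lia.
  have -> : (i - (i - u) = u)%N by lia.
  have -> : (l + (i - u) = l + i - u)%N by lia.
  by rewrite natrM; ring.
apply: (@sum_range _ H) => //; try lia.
move=> u /andP[h1 h2]; rewrite /H nth_default ?mul0r //; exact: leq_trans hq h1.
Qed.

Lemma delta_big {C : fieldType} (a : nat -> {poly C}) N l d :
  (forall i, (N < i)%N -> a i = 0) -> (N < d)%N -> delta a (l + d) d = 0.
Proof.
move=> HN hd; rewrite /delta big_nat_cond big1 // => i /andP[/andP[h1 _] _].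
by rewrite HN ?coef0 ?mulr0 //; lia.
Qed.

Lemma coefE {C : fieldType} {N : nat} {a : nat -> {poly C}}
  {lambda : nat -> C} {P : nat -> {poly C}} :
  (forall i, (size (a i) <= i.+1)%N) ->
  a 0%N = 0 ->
  (forall i, (N < i)%N -> a i = 0) ->
  (forall n, \sum_(1 <= i < N.+1) a i * (P n)^`(i) = lambda n *: P n) ->
  forall j l, lambda j * (P j)`_l =
     \sum_(0 <= d < N.+1) delta a (l + d) d * (P j)`_(l + d).
Proof.
move=> Ha Ha0 HN HL j l.
have := congr1 (fun p : {poly C} => p`_l) (HL j); rewrite /= coefZ coef_sum => <-.
rewrite (eq_bigr _ (fun i _ => @coef_term C (P j) (a i) i l (Ha i))).
pose T i d := ('C(l + d, i))%:R * (i`!)%:R * (a i)`_(i - d) * (P j)`_(l + d).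
transitivity (\sum_(1 <= i < N.+1) \sum_(0 <= d < N.+1) (if (d <= i)%N then T i d else 0)).
  apply: eq_big_nat => i /andP[_ hi].
  rewrite (eq_big_nat _ _ (F2 := fun d => if (d <= i)%N then T i d else 0)); last first.
    by move=> d /andP[_ hd]; rewrite ltnS in hd; rewrite hd.
  apply: sum_range => //; try lia.
  by move=> d /andP[h1 _]; rewrite leqNgt h1.
rewrite exchange_big_nat /=.
apply: eq_big_nat => d _.
rewrite /delta mulr_suml.
pose G i := if (d <= i)%N then T i d else 0.
transitivity (\sum_(0 <= i < N + l + d + 1) G i).
  apply: (@sum_range _ G) => //; try lia.
    move=> i /andP[_ hi]; have -> : i = 0%N by lia.
    by rewrite /G /T Ha0 coef0 mulr0 mul0r if_same.
  by move=> i /andP[h1 _]; rewrite /G /T HN ?coef0 ?mulr0 ?mul0r ?if_same //; lia.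
symmetry.
rewrite (eq_big_nat _ _ (F2 := G)); last first.
  by move=> i /andP[hi _]; rewrite /G hi.
apply: (@sum_range _ G) => //; try lia.
  by move=> i /andP[_ hi]; rewrite /G leqNgt hi.
by move=> i /andP[h1 _]; rewrite /G /T bin_small ?mul0r ?if_same //; lia.
Qed.

Lemma lam_delta {C : fieldType} {N : nat} {a : nat -> {poly C}}
  {lambda : nat -> C} {P : nat -> {poly C}} :
  (forall i, (size (a i) <= i.+1)%N) ->
  a 0%N = 0 ->
  (forall i, (N < i)%N -> a i = 0) ->
  (forall n, size (P n) = n.+1 /\ P n \is monic) ->
  (forall n, \sum_(1 <= i < N.+1) a i * (P n)^`(i) = lambda n *: P n) ->
  forall j, lambda j = delta a j 0.
Proof.
move=> Ha Ha0 HN HP HL j.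
have := coefE Ha Ha0 HN HL j j.
have [hs hm] := HP j.
rewrite (b1 hs hm) mulr1 => ->.
rewrite big_ltn // addn0 (b1 hs hm) mulr1 big_nat_cond big1 ?addr0 // => d /andP[/andP[hd _] _].
by rewrite (bz hs) ?mulr0 //; lia.
Qed.

Lemma lam_formula {C : fieldType} {N : nat} {a : nat -> {poly C}}
  {lambda : nat -> C} {P : nat -> {poly C}} :
  (forall i, (size (a i) <= i.+1)%N) ->
  a 0%N = 0 ->
  (forall i, (N < i)%N -> a i = 0) ->
  (forall n, size (P n) = n.+1 /\ P n \is monic) ->
  (forall n, \sum_(1 <= i < N.+1) a i * (P n)^`(i) = lambda n *: P n) ->
  forall n j, (j <= n)%N -> lambda j =
    \sum_(1 <= s < n.+1) ('C(j,s))%:R * (s`!)%:R * (a s)`_s.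
Proof.
move=> Ha Ha0 HN HP HL n j hj.
rewrite (lam_delta Ha Ha0 HN HP HL) /delta.
pose G s := ('C(j,s))%:R * (s`!)%:R * (a s)`_s : C.
rewrite (eq_big_nat _ _ (F2 := G)); last by move=> i _; rewrite subn0.
rewrite (@sum_range _ G 0 0 j.+1 n.+1) //; last first.
  by move=> i /andP[h1 _]; rewrite /G bin_small ?mul0r //.
symmetry; apply: (@sum_range _ G) => //; try lia.
move=> i /andP[_ hi]; have -> : i = 0%N by lia.
by rewrite /G Ha0 coef0 mulr0.
Qed.

Lemma stepD {C : fieldType} {N : nat} {a : nat -> {poly C}}
  {lambda : nat -> C} {P : nat -> {poly C}} :
  (forall i, (size (a i) <= i.+1)%N) ->
  a 0%N = 0 ->
  (forall i, (N < i)%N -> a i = 0) ->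
  (forall n, size (P n) = n.+1 /\ P n \is monic) ->
  (forall n, \sum_(1 <= i < N.+1) a i * (P n)^`(i) = lambda n *: P n) ->
  forall j l K, (l < j)%N -> (j - l <= K)%N ->
  (lambda j - lambda l) * (P j)`_l =
     \sum_(1 <= d < K.+1) delta a (l + d) d * (P j)`_(l + d).
Proof.
move=> Ha Ha0 HN HP HL j l K hlj hK.
rewrite mulrBl (coefE Ha Ha0 HN HL j l) (lam_delta Ha Ha0 HN HP HL l).
rewrite big_ltn // addn0 addrC addKr.
pose F d := delta a (l + d) d * (P j)`_(l + d).
have [hs _] := HP j.
rewrite (@sum_range _ F 1 1 N.+1 (N + K + 1)) //; try lia; last first.
  by move=> d /andP[h1 _]; rewrite /F (@delta_big _ a N l d HN) ?mul0r //; lia.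
symmetry; apply: (@sum_range _ F) => //; try lia.
by move=> d /andP[h1 _]; rewrite /F (bz hs) ?mulr0 //; lia.
Qed.

Lemma binsum m c s : 'C(m + c.+1, s.+1) = ('C(m, s.+1) + \sum_(0 <= t < c.+1) 'C(m + t, s))%N.
Proof.
elim: c => [|c IH].
  by rewrite big_nat1 addn0 addn1 binS addnC.
by rewrite big_nat_recr //= addnS binS IH; lia.
Qed.

Lemma cof_row0 {C : fieldType} k (A B : 'M[C]_k.+1) c :
  (forall r c', r != ord0 -> A r c' = B r c') ->
  cofactor A ord0 c = cofactor B ord0 c.
Proof.
move=> h; rewrite /cofactor; congr (_ * \det _); apply/matrixP => r c'.
by rewrite !mxE; apply: h; rewrite eq_sym neq_lift.
Qed.

Theorem main {C : fieldType} (N : nat) (a : nat -> {poly C})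
  (lambda : nat -> C) (P : nat -> {poly C}) :
  (forall i, (size (a i) <= i.+1)%N) ->
  a 0%N = 0 ->
  (forall i, (N < i)%N -> a i = 0) ->
  (forall n, size (P n) = n.+1 /\ P n \is monic) ->
  (forall n, \sum_(1 <= i < N.+1) a i * (P n)^`(i) = lambda n *: P n) ->
  forall n k, (1 <= k <= n)%N ->
    (-1) ^+ k.+1 * delta a n k =
    \sum_(1 <= s < n.+1) Delta P k n s * (s`!)%:R * (a s)`_s.
Proof.
move=> Ha Ha0 HN HP HL n [|k'] // /andP[_ hk].
have hmk : (n - k'.+1 + k'.+1 = n)%N by rewrite subnK.
pose D s := Dmat P k'.+1 n s.
pose cof c := cofactor (D 1%N) ord0 c.
have hrow : forall s s' r c, r != ord0 -> D s r c = D s' r c.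
  move=> s s' r c hr; rewrite !mxE.
  by have -> : (nat_of_ord r == 0%N) = false by apply/negbTE.
have hcof : forall s c, cofactor (D s) ord0 c = cof c.
  by move=> s c; apply: cof_row0 => r c' hr; apply: hrow.
pose w s := (s`!)%:R * (a s)`_s : C.
symmetry.
transitivity (\sum_(c < k'.+1) (lambda (n - k'.+1 + c.+1)%N - lambda (n - k'.+1)%N)
     * (P (n - k'.+1 + c.+1)%N)`_(n - k'.+1)%N * cof c).
  rewrite /Delta.
  transitivity (\sum_(1 <= s < n.+1) \sum_(c < k'.+1) D s ord0 c * w s * cof c).
    apply: eq_bigr => s _.
    rewrite (expand_det_row _ ord0) -mulrA mulr_suml; apply: eq_bigr => c _.
    rewrite -/(D s) hcof /w; ring.
  rewrite exchange_big /=; apply: eq_bigr => c _; rewrite -mulr_suml; congr (_ * _).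
  have hc := ltn_ord c.
  rewrite (lam_formula Ha Ha0 HN HP HL n (n - k'.+1 + c.+1)%N); last by lia.
  rewrite (lam_formula Ha Ha0 HN HP HL n (n - k'.+1)%N); last by lia.
  rewrite -sumrB mulr_suml; apply: eq_big_nat => s /andP[hs1 hs2].
  rewrite mxE /=.
  have hb : \sum_(0 <= t < c.+1) ('C(n - k'.+1 + t, s - 1)%N)%:R =
     ('C(n - k'.+1 + c.+1, s)%N)%:R - ('C(n - k'.+1, s)%N)%:R :> C.
    case: s hs1 hs2 => // s' _ _.
    by rewrite subSS subn0 binsum natrD natr_sum; ring.
  rewrite hb /w; ring.
transitivity (\sum_(c < k'.+1)
   (\sum_(1 <= d < k'.+2) delta a (n - k'.+1 + d)%N d * (P (n - k'.+1 + c.+1)%N)`_(n - k'.+1 + d)%N) * cof c).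
  apply: eq_bigr => c _; have hc := ltn_ord c.
  by rewrite (stepD Ha Ha0 HN HP HL (n - k'.+1 + c.+1)%N (n - k'.+1)%N k'.+1) //; lia.
under eq_bigr do rewrite mulr_suml.
rewrite exchange_big /= big_nat_recr //=.
rewrite big_nat_cond big1 ?add0r; last first.
  move=> d /andP[/andP[hd1 hd2] _].
  under eq_bigr do rewrite -mulrA.
  rewrite -mulr_sumr.
  suff -> : \sum_(c < k'.+1) (P (n - k'.+1 + c.+1)%N)`_(n - k'.+1 + d)%N * cof c = 0 by rewrite mulr0.
  pose M := \matrix_(r < k'.+1, c < k'.+1)
     if r == ord0 then (P (n - k'.+1 + c.+1)%N)`_(n - k'.+1 + d)%N else D 1%N r c.
  have e1 : \det M = \sum_(c < k'.+1) (P (n - k'.+1 + c.+1)%N)`_(n - k'.+1 + d)%N * cof c.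
    rewrite (expand_det_row _ ord0); apply: eq_bigr => c _; rewrite mxE eqxx; congr (_ * _).
    by apply: cof_row0 => r c' hr; rewrite mxE (negbTE hr).
  rewrite -e1; apply: (@determinant_alternate _ _ M ord0 (inord d)).
    by apply/eqP => h; have := congr1 val h; rewrite /= inordK //; lia.
  have hne : (inord d == ord0 :> 'I_k'.+1) = false.
    by apply/negbTE/eqP => h; have := congr1 val h; rewrite /= inordK //; lia.
  move=> c; rewrite !mxE eqxx hne inordK //.
  by have -> : (d == 0%N) = false by lia.
rewrite hmk.
under eq_bigr do rewrite -mulrA.
rewrite -mulr_sumr.
rewrite (bigD1 ord_max) //= big1 ?addr0; last first.
  move=> c hc; have hc' := ltn_ord c.
  rewrite -val_eqE /= in hc.
  by rewrite (bz (proj1 (HP _))) ?mul0r //; lia.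
rewrite hmk (b1 (proj1 (HP n)) (proj2 (HP n))) mul1r.
have hdet : \det (row' ord0 (col' ord_max (D 1%N))) = 1.
  rewrite -det_tr det_trig; last first.
    apply/forallP => i; apply/forallP => j; apply/implyP => hij.
    rewrite !mxE lift0 lift_max /=.
    by apply/eqP; rewrite (bz (proj1 (HP _))) // ltn_add2l ltnS.
  apply: big1 => i _; rewrite !mxE lift0 lift_max /=.
  exact: (b1 (proj1 (HP _)) (proj2 (HP _))).
rewrite /cof /cofactor hdet /= add0n !exprS; ring.
Qed.

Theorem lemma3 (R : realType) (N : nat) (a : nat -> {poly R[i]})
  (lambda : nat -> R[i]) (P : nat -> {poly R[i]}) :
  (1 <= N)%N ->
  (forall i, (size (a i) <= i.+1)%N) ->
  a 0%N = 0 ->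
  (forall i, (N < i)%N -> a i = 0) ->
  lambda 0%N = 0 ->
  (forall n m, (m < n)%N -> lambda n != lambda m) ->
  (forall n, size (P n) = n.+1 /\ P n \is monic) ->
  (forall n, \sum_(1 <= i < N.+1) a i * (P n)^`(i) = lambda n *: P n) ->
  forall n k, (1 <= n)%N -> (1 <= k <= n)%N ->
    (-1) ^+ k.+1 * delta a n k =
    \sum_(1 <= s < n.+1) Delta P k n s * (s`!)%:R * (a s)`_s.
Proof.
Proof.
move=> _ Ha Ha0 HN _ _ HP HL n k _ hk.
have H := (@main _ N a lambda P Ha Ha0 HN HP HL n k hk). rewrite {}H. apply: eq_bigr => s _. Timeout 20 reflexivity.
Qed.
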